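(* Assume $\|\cdot\|=|||\cdot|||=\|\cdot\|_2$. Then: (a) For $L_1,L_2\in\mathrm{Gr}(V,m)$, $\|\Pi_{L_1}-\Pi_{L_2}\|_2=\operatorname{dist}(L_1,L_2)=\overline{\operatorname{dist}}(L_1,L_2)$, where $\Pi_{L_i}$ is the orthogonal projection onto $L_i$ and $\|\Pi_{L_1}-\Pi_{L_2}\|_2=\max_{\|x\|_2=1}\|(\Pi_{L_1}-\Pi_{L_2})x\|_2$. (b) If $L\in\mathrm{Gr}(V,m)$ and $L\cap\operatorname{int}(K)\neq\emptyset$, then $\nu(L)=\sin\angle(L^\perp,K^* )$. (c) If $L\in\mathrm{Gr}(V,m)$ and $L^\perp\cap\operatorname{int}(K^* )\neq\emptyset$, then $\bar\nu(L)=\sin\angle(L,K)$.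
   Context: $V$ is a finite-dimensional real vector space with inner product $\langle\cdot,\cdot\rangle$ and Euclidean norm $\|v\|_2=\sqrt{\langle v,v\rangle}$; $K\subseteq V$ is a regular closed convex cone with dual cone $K^*:=\{u:\langle u,x\rangle\ge0\ \forall x\in K\}$; $\mathrm{Gr}(V,m)$ is the set of $m$-dimensional subspaces ($1\le m<\dim V$), $L^\perp$ the orthogonal complement. With norms $\|\cdot\|,|||\cdot|||$ on $V$ (dual norms $\|u\|^*:=\max_{\|x\|=1}\langle u,x\rangle$, similarly $|||\cdot|||^*$): $\operatorname{dist}(L_1,L_2):=\max_{x\in L_1,x\neq0}\min_{v\in L_2}\frac{|||x-v|||}{\|x\|}$, $\overline{\operatorname{dist}}(L_1,L_2):=\max_{x\in L_1,x\neq0}\inf_{v\in L_2,v\neq0}\frac{|||x-v|||}{\|v\|}$, $\nu(L):=\min\{\|y-u\|^*:u\in K^*,y\in L^\perp,|||u|||^*=1\}$, $\bar\nu(L):=\min\{|||v-x|||:v\in K,x\in L,\|x\|=1\}$. For $x,y\neq0$, $\angle(x,y):=\arccos\frac{\langle x,y\rangle}{\|x\|_2\|y\|_2}\in[0,\pi]$; for a linear subspace $L$ and closed convex cone $C$, $\angle(L,C):=\min\{\angle(x,v):x\in L\setminus\{0\},v\in C\setminus\{0\}\}$. *)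

(* Defs.v *)
From Stdlib Require Import Reals Lra.
Open Scope R_scope.

(* V = R^n, represented by functions nat -> R vanishing at indices >= n,
   with the standard (Euclidean) inner product. *)
Definition vec := nat -> R.

Definition isvec (n : nat) (x : vec) : Prop := forall i, (n <= i)%nat -> x i = 0.

Fixpoint vsum (n : nat) (f : nat -> R) : R :=
  match n with O => 0 | S k => vsum k f + f k end.

Definition inner (n : nat) (x y : vec) : R := vsum n (fun i => x i * y i).
Definition norm2 (n : nat) (x : vec) : R := sqrt (inner n x x).

Definition vsub (x y : vec) : vec := fun i => x i - y i.
Definition vzero : vec := fun _ => 0.
Definition nonzero (n : nat) (x : vec) : Prop := exists i, (i < n)%nat /\ x i <> 0.

Definition lincomb (m : nat) (c : nat -> R) (b : nat -> vec) : vec :=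
  fun i => vsum m (fun j => c j * b j i).

Definition Gr (n m : nat) (L : vec -> Prop) : Prop :=
  exists b : nat -> vec,
    (forall j, (j < m)%nat -> isvec n (b j)) /\
    (forall c, (forall i, lincomb m c b i = 0) -> forall j, (j < m)%nat -> c j = 0) /\
    (forall x, L x <-> exists c, forall i, x i = lincomb m c b i).

Definition perp (n : nat) (L : vec -> Prop) : vec -> Prop :=
  fun x => isvec n x /\ forall y, L y -> inner n x y = 0.

Definition is_proj (n : nat) (L : vec -> Prop) (x p : vec) : Prop :=
  L p /\ forall y, L y -> inner n (vsub x p) y = 0.

Definition vinterior (n : nat) (K : vec -> Prop) : vec -> Prop :=
  fun x => isvec n x /\ exists eps, eps > 0 /\
    forall y, isvec n y -> norm2 n (vsub y x) < eps -> K y.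

Definition closed_set (n : nat) (K : vec -> Prop) : Prop :=
  forall x, isvec n x ->
    (forall eps, eps > 0 -> exists y, K y /\ norm2 n (vsub x y) < eps) -> K x.

Definition regular_cone (n : nat) (K : vec -> Prop) : Prop :=
  (forall x, K x -> isvec n x) /\
  K vzero /\
  (forall x t, K x -> t >= 0 -> K (fun i => t * x i)) /\
  (forall x y, K x -> K y -> K (fun i => x i + y i)) /\
  closed_set n K /\
  (forall x, K x -> K (fun i => - x i) -> forall i, x i = 0) /\
  (exists x, vinterior n K x).

Definition dual_cone (n : nat) (K : vec -> Prop) : vec -> Prop :=
  fun u => isvec n u /\ forall x, K x -> inner n u x >= 0.

Definition is_max (S : R -> Prop) (a : R) : Prop := S a /\ forall y, S y -> y <= a.
Definition is_min (S : R -> Prop) (a : R) : Prop := S a /\ forall y, S y -> a <= y.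
Definition is_inf (S : R -> Prop) (a : R) : Prop :=
  (forall y, S y -> a <= y) /\ (forall b, (forall y, S y -> b <= y) -> b <= a).

Definition dualnorm_is (n : nat) (u : vec) (r : R) : Prop :=
  is_max (fun s => exists x, isvec n x /\ norm2 n x = 1 /\ s = inner n u x) r.

(* ||Pi_L1 - Pi_L2||_2 = max_{||x||_2=1} ||(Pi_L1 - Pi_L2) x||_2 : set of values *)
Definition proj_diff_set (n : nat) (L1 L2 : vec -> Prop) : R -> Prop :=
  fun r => exists x p1 p2, isvec n x /\ norm2 n x = 1 /\
    is_proj n L1 x p1 /\ is_proj n L2 x p2 /\ r = norm2 n (vsub p1 p2).

(* dist(L1,L2) = max_{x in L1\0} min_{v in L2} |||x-v||| / ||x|| *)
Definition dist_set (n : nat) (L1 L2 : vec -> Prop) : R -> Prop :=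
  fun r => exists x, L1 x /\ nonzero n x /\
    is_min (fun s => exists v, L2 v /\ s = norm2 n (vsub x v) / norm2 n x) r.

(* distbar(L1,L2) = max_{x in L1\0} inf_{v in L2\0} |||x-v||| / ||v|| *)
Definition distbar_set (n : nat) (L1 L2 : vec -> Prop) : R -> Prop :=
  fun r => exists x, L1 x /\ nonzero n x /\
    is_inf (fun s => exists v, L2 v /\ nonzero n v /\ s = norm2 n (vsub x v) / norm2 n v) r.

(* nu(L) = min { ||y-u||^* : u in K^*, y in L^perp, |||u|||^* = 1 } *)
Definition nu_set (n : nat) (K L : vec -> Prop) : R -> Prop :=
  fun r => exists u y, dual_cone n K u /\ perp n L y /\
    dualnorm_is n u 1 /\ dualnorm_is n (vsub y u) r.

(* nubar(L) = min { |||v-x||| : v in K, x in L, ||x|| = 1 } *)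
Definition nubar_set (n : nat) (K L : vec -> Prop) : R -> Prop :=
  fun r => exists v x, K v /\ L x /\ norm2 n x = 1 /\ r = norm2 n (vsub v x).

Definition angle (n : nat) (x y : vec) : R :=
  acos (inner n x y / (norm2 n x * norm2 n y)).

(* angle(L,C) = min { angle(x,v) : x in L\0, v in C\0 } : set of values *)
Definition angle_set (n : nat) (L C : vec -> Prop) : R -> Prop :=
  fun r => exists x v, L x /\ nonzero n x /\ C v /\ nonzero n v /\ r = angle n x v.

(* Main.v *)
Require Import Defs.
From Stdlib Require Import Reals Lra Lia List Classical ClassicalEpsilon FunctionalExtensionality Rtopology.
Open Scope R_scope.

Lemma vsum_ext n f g : (forall i, (i < n)%nat -> f i = g i) -> vsum n f = vsum n g.
Proof. induction n; simpl; intros H; auto. rewrite IHn by (intros; apply H; lia). rewrite H by lia. auto. Qed.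

Lemma vsum_plus n f g : vsum n (fun i => f i + g i) = vsum n f + vsum n g.
Proof. induction n; simpl; [lra|]. rewrite IHn. lra. Qed.

Lemma vsum_minus n f g : vsum n (fun i => f i - g i) = vsum n f - vsum n g.
Proof. induction n; simpl; [lra|]. rewrite IHn. lra. Qed.

Lemma vsum_scal n c f : vsum n (fun i => c * f i) = c * vsum n f.
Proof. induction n; simpl; [lra|]. rewrite IHn. lra. Qed.

Lemma vsum_zero n f : (forall i, (i < n)%nat -> f i = 0) -> vsum n f = 0.
Proof. induction n; simpl; intros H; auto. rewrite IHn by (intros; apply H; lia). rewrite H by lia. lra. Qed.

Lemma vsum_nonneg n f : (forall i, (i < n)%nat -> 0 <= f i) -> 0 <= vsum n f.
Proof. induction n; simpl; intros H; [lra|]. specialize (IHn (fun i h => H i ltac:(lia))). specialize (H n ltac:(lia)). lra. Qed.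

Lemma vsum_le n f g : (forall i, (i < n)%nat -> f i <= g i) -> vsum n f <= vsum n g.
Proof. induction n; simpl; intros H; [lra|]. specialize (IHn (fun i h => H i ltac:(lia))). specialize (H n ltac:(lia)). lra. Qed.

Lemma vsum_nonneg_zero n f : (forall i, (i < n)%nat -> 0 <= f i) -> vsum n f = 0 ->
  forall i, (i < n)%nat -> f i = 0.
Proof.
  induction n; simpl; intros H H0 i Hi; [lia|].
  assert (A := vsum_nonneg n f (fun i h => H i ltac:(lia))).
  assert (B := H n ltac:(lia)).
  destruct (Nat.eq_dec i n). subst; lra.
  apply IHn; auto. lra. lia.
Qed.

Lemma vsum_swap n m (f : nat -> nat -> R) :
  vsum n (fun i => vsum m (fun j => f i j)) = vsum m (fun j => vsum n (fun i => f i j)).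
Proof.
  induction n; simpl.
  - symmetry; apply vsum_zero; auto.
  - rewrite IHn. rewrite <- vsum_plus. auto.
Qed.

Lemma vsum_delta n k a : (k < n)%nat -> vsum n (fun i => if Nat.eqb i k then a else 0) = a.
Proof.
  induction n; simpl; intros H; [lia|].
  destruct (Nat.eqb_spec n k).
  - subst. rewrite vsum_zero. lra. intros i Hi. destruct (Nat.eqb_spec i k); [lia|auto].
  - rewrite IHn by lia. lra.
Qed.

Definition vadd (x y : vec) : vec := fun i => x i + y i.
Definition vscal (t : R) (x : vec) : vec := fun i => t * x i.

Section Inner.
Variable n : nat.
Notation ip := (inner n).

Lemma ip_comm x y : ip x y = ip y x.
Proof. unfold inner. apply vsum_ext; intros; ring. Qed.

Lemma ip_addl x y z : ip (vadd x y) z = ip x z + ip y z.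
Proof. unfold inner, vadd. rewrite <- vsum_plus. apply vsum_ext; intros; ring. Qed.

Lemma ip_subl x y z : ip (vsub x y) z = ip x z - ip y z.
Proof. unfold inner, vsub. rewrite <- vsum_minus. apply vsum_ext; intros; ring. Qed.

Lemma ip_scall t x z : ip (vscal t x) z = t * ip x z.
Proof. unfold inner, vscal. rewrite <- vsum_scal. apply vsum_ext; intros; ring. Qed.

Lemma ip_addr x y z : ip z (vadd x y) = ip z x + ip z y.
Proof. rewrite ip_comm, ip_addl, (ip_comm x), (ip_comm y). auto. Qed.

Lemma ip_subr x y z : ip z (vsub x y) = ip z x - ip z y.
Proof. rewrite ip_comm, ip_subl, (ip_comm x), (ip_comm y). auto. Qed.

Lemma ip_scalr t x z : ip z (vscal t x) = t * ip z x.
Proof. rewrite ip_comm, ip_scall, (ip_comm x). auto. Qed.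

Lemma ip_nonneg x : 0 <= ip x x.
Proof. apply vsum_nonneg. intros; apply Rle_0_sqr. Qed.

Lemma ip_zero_coord x : ip x x = 0 -> forall i, (i < n)%nat -> x i = 0.
Proof.
  intros H i Hi. assert (A := vsum_nonneg_zero n (fun i => x i * x i) (fun i _ => Rle_0_sqr (x i)) H i Hi).
  simpl in A. nra.
Qed.

Lemma ip_zero_l x y : (forall i, (i < n)%nat -> x i = 0) -> ip x y = 0.
Proof. intros H. apply vsum_zero. intros i Hi. rewrite H; auto; ring. Qed.

Lemma isvec_eq x y : isvec n x -> isvec n y -> (forall i, (i < n)%nat -> x i = y i) -> x = y.
Proof.
  intros Hx Hy H. apply functional_extensionality. intros i.
  destruct (Nat.lt_ge_cases i n). auto. rewrite Hx, Hy; auto.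
Qed.

Lemma isvec_ip_zero x : isvec n x -> ip x x = 0 -> x = vzero.
Proof.
  intros Hx H. apply isvec_eq; auto. intros i _; reflexivity.
  intros; apply ip_zero_coord; auto.
Qed.

Lemma cauchy_schwarz_sq x y : (ip x y)^2 <= ip x x * ip y y.
Proof.
  destruct (Req_dec (ip y y) 0) as [H|H].
  - rewrite (ip_comm x y), ip_zero_l. rewrite H. nra. apply ip_zero_coord; auto.
  - assert (Hp : 0 < ip y y) by (assert (A:=ip_nonneg y); lra).
    set (t := ip x y / ip y y).
    assert (A := ip_nonneg (vsub x (vscal t y))).
    rewrite ip_subl, !ip_subr, ip_scall, !ip_scalr, ip_scall in A.
    rewrite (ip_comm y x) in A.
    assert (E : ip x x - t * ip x y - t * ip x y + t * t * ip y y = ip x x - ip x y ^ 2 / ip y y).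
    { unfold t. field. lra. }
    assert (F : 0 <= ip x x - ip x y ^ 2 / ip y y) by lra.
    assert (G : ip x y ^ 2 / ip y y * ip y y = ip x y ^ 2) by (field; lra).
    nra.
Qed.

Definition nrm x := norm2 n x.

Lemma nrm_nonneg x : 0 <= nrm x.
Proof. apply sqrt_pos. Qed.

Lemma nrm_sq x : nrm x * nrm x = ip x x.
Proof. apply sqrt_sqrt, ip_nonneg. Qed.

Lemma nrm_sq2 x : nrm x ^ 2 = ip x x.
Proof. rewrite <- nrm_sq. ring. Qed.

Lemma nrm_eq x r : 0 <= r -> ip x x = r * r -> nrm x = r.
Proof. intros. unfold nrm, norm2. rewrite H0. apply sqrt_square; auto. Qed.

Lemma cauchy_schwarz x y : ip x y <= nrm x * nrm y.
Proof.
  assert (A := cauchy_schwarz_sq x y). rewrite <- !nrm_sq in A.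
  assert (B := nrm_nonneg x). assert (C := nrm_nonneg y).
  destruct (Rle_dec (ip x y) 0). nra.
  apply Rsqr_incr_0_var. unfold Rsqr. nra. nra.
Qed.

Lemma cauchy_schwarz_abs x y : - (nrm x * nrm y) <= ip x y.
Proof.
  assert (A := cauchy_schwarz (vscal (-1) x) y). rewrite ip_scall in A.
  assert (nrm (vscal (-1) x) = nrm x).
  { apply nrm_eq. apply nrm_nonneg. rewrite ip_scall, ip_scalr, <- nrm_sq. ring. }
  rewrite H in A. lra.
Qed.

Lemma nrm_scal t x : nrm (vscal t x) = Rabs t * nrm x.
Proof.
  apply nrm_eq. apply Rmult_le_pos; [apply Rabs_pos|apply nrm_nonneg].
  rewrite ip_scall, ip_scalr, <- nrm_sq.
  replace (Rabs t * nrm x * (Rabs t * nrm x)) with ((Rabs t * Rabs t) * (nrm x * nrm x)) by ring.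
  rewrite <- Rabs_mult, Rabs_pos_eq by nra. ring.
Qed.

Lemma nrm_unit x : nrm x = 1 <-> ip x x = 1.
Proof.
  split; intros H. rewrite <- nrm_sq, H; ring. apply nrm_eq; lra.
Qed.

Lemma nrm_zero_ip x : nrm x = 0 -> ip x x = 0.
Proof. intros H. rewrite <- nrm_sq, H; ring. Qed.

Lemma nonzero_nrm x : Defs.nonzero n x -> 0 < nrm x.
Proof.
  intros [i [Hi Hx]]. destruct (nrm_nonneg x) as [|H]; auto.
  exfalso. apply Hx. apply ip_zero_coord; auto. apply nrm_zero_ip; auto.
Qed.

Lemma nrm_pos_nonzero x : 0 < nrm x -> Defs.nonzero n x.
Proof.
  intros H. apply NNPP; intros C.
  assert (forall i, (i < n)%nat -> x i = 0).
  { intros i Hi. apply NNPP; intros D. apply C; exists i; auto. }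
  assert (ip x x = 0) by (apply ip_zero_l; auto).
  rewrite <- nrm_sq in H1. nra.
Qed.

Lemma normalize x : Defs.nonzero n x -> nrm (vscal (/ nrm x) x) = 1.
Proof.
  intros H. assert (A := nonzero_nrm x H). rewrite nrm_scal.
  rewrite Rabs_pos_eq. field; lra. left; apply Rinv_0_lt_compat; auto.
Qed.

Lemma isvec_vscal t x : isvec n x -> isvec n (vscal t x).
Proof. intros H i Hi. unfold vscal. rewrite H; auto; ring. Qed.
Lemma isvec_vadd x y : isvec n x -> isvec n y -> isvec n (vadd x y).
Proof. intros H H' i Hi. unfold vadd. rewrite H, H'; auto; ring. Qed.
Lemma isvec_vsub x y : isvec n x -> isvec n y -> isvec n (vsub x y).
Proof. intros H H' i Hi. unfold vsub. rewrite H, H'; auto; ring. Qed.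

Lemma ip_expand x y : ip (vsub x y) (vsub x y) = ip x x - 2 * ip x y + ip y y.
Proof. rewrite ip_subl, !ip_subr, (ip_comm y x). ring. Qed.

End Inner.

Notation gnrm := nrm (only parsing).


Lemma homog : forall p (rows : list (nat -> R)), (length rows < p)%nat ->
  exists c, (exists j, (j < p)%nat /\ c j <> 0) /\
    forall r, In r rows -> vsum p (fun j => r j * c j) = 0.
Proof.
  induction p as [|p IH]; intros rows Hl; [simpl in Hl; lia|].
  destruct (classic (exists r, In r rows /\ r p <> 0)) as [[r0 [Hin Hr0]]|Hno].
  - destruct (in_split r0 rows Hin) as [l1 [l2 Heq]].
    set (rows' := map (fun r j => r j - r p / r0 p * r0 j) (l1 ++ l2)).
    assert (Hl' : (length rows' < p)%nat).
    { unfold rows'. rewrite length_map, length_app. subst rows.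
      rewrite length_app in Hl. simpl in Hl. lia. }
    destruct (IH rows' Hl') as [c' [[j0 [Hj0 Hc0]] Heqs]].
    set (S0 := vsum p (fun j => r0 j * c' j)).
    set (cp := - S0 / r0 p).
    exists (fun j => if Nat.eqb j p then cp else c' j). split.
    + exists j0. split; [lia|]. destruct (Nat.eqb_spec j0 p); [lia|auto].
    + intros r Hr. simpl. rewrite Nat.eqb_refl.
      rewrite (vsum_ext p _ (fun j => r j * c' j)).
      2:{ intros i Hi. destruct (Nat.eqb_spec i p); [lia|auto]. }
      subst rows. apply in_app_or in Hr. destruct Hr as [Hr|[Hr|Hr]].
      3,1: (assert (Hr' : In (fun j => r j - r p / r0 p * r0 j) rows')
              by (unfold rows'; apply (in_map (fun r j => r j - r p / r0 p * r0 j)); apply in_or_app; auto);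
            specialize (Heqs _ Hr');
            rewrite (vsum_ext p _ (fun j => r j * c' j - r p / r0 p * (r0 j * c' j))) in Heqs
              by (intros; ring);
            rewrite vsum_minus, vsum_scal in Heqs; fold S0 in Heqs;
            unfold cp; field_simplify; [|auto];
            replace (vsum p (fun j => r j * c' j)) with (r p / r0 p * S0) by lra;
            field; auto).
      subst r. unfold cp. fold S0. field. auto.
  - exists (fun j => if Nat.eqb j p then 1 else 0). split.
    + exists p. split; [lia|]. rewrite Nat.eqb_refl. lra.
    + intros r Hr. simpl. rewrite Nat.eqb_refl.
      rewrite vsum_zero. assert (r p = 0). { apply NNPP; intro C. apply Hno; eauto. }
      rewrite H; ring.
      intros i Hi. destruct (Nat.eqb_spec i p); [lia|ring].
Qed.

Lemma square_surj m (A : nat -> nat -> R) :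
  (forall c, (forall k, (k < m)%nat -> vsum m (fun j => A k j * c j) = 0) ->
     forall j, (j < m)%nat -> c j = 0) ->
  forall y, exists c, forall k, (k < m)%nat -> vsum m (fun j => A k j * c j) = y k.
Proof.
  intros Hinj y.
  set (rows := map (fun k j => if Nat.ltb j m then A k j else - y k) (seq 0 m)).
  assert (Hl : (length rows < S m)%nat) by (unfold rows; rewrite length_map, length_seq; lia).
  destruct (homog (S m) rows Hl) as [c [[j0 [Hj0 Hc0]] Heqs]].
  assert (E : forall k, (k < m)%nat -> vsum m (fun j => A k j * c j) - y k * c m = 0).
  { intros k Hk. assert (Hin : In (fun j => if Nat.ltb j m then A k j else - y k) rows).
    { unfold rows. apply (in_map (fun k j => if Nat.ltb j m then A k j else - y k)). apply in_seq. lia. }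
    specialize (Heqs _ Hin). simpl in Heqs. rewrite Nat.ltb_irrefl in Heqs.
    rewrite (vsum_ext m _ (fun j => A k j * c j)) in Heqs.
    lra. intros i Hi. apply Nat.ltb_lt in Hi. rewrite Hi. auto. }
  destruct (Req_dec (c m) 0) as [Hm|Hm].
  - exfalso. assert (forall j, (j < m)%nat -> c j = 0).
    { apply Hinj. intros k Hk. specialize (E k Hk). rewrite Hm in E. lra. }
    destruct (Nat.eq_dec j0 m). subst; auto. apply Hc0, H. lia.
  - exists (fun j => c j / c m). intros k Hk.
    rewrite (vsum_ext m _ (fun j => / c m * (A k j * c j))) by (intros; unfold Rdiv; ring).
    rewrite vsum_scal. specialize (E k Hk). field_simplify; auto.
    replace (vsum m (fun j => A k j * c j)) with (y k * c m) by lra. field; auto.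
Qed.

Section Sub.
Variable n : nat.
Notation ip := (inner n).

Definition lin (L : vec -> Prop) : Prop :=
  (forall x, L x -> isvec n x) /\ L vzero /\
  (forall x y, L x -> L y -> L (vadd x y)) /\
  (forall t x, L x -> L (vscal t x)).

Definition subsp (L : vec -> Prop) : Prop :=
  lin L /\ forall x, exists p, is_proj n L x p.

Lemma vsub_as x y : vsub x y = vadd x (vscal (-1) y).
Proof. apply functional_extensionality; intros; unfold vsub, vadd, vscal; ring. Qed.

Lemma lin_sub L x y : lin L -> L x -> L y -> L (vsub x y).
Proof. intros (?&?&Ha&Hs) ??. rewrite vsub_as. apply Ha; auto. Qed.

Lemma lin_vec L x : lin L -> L x -> isvec n x.
Proof. intros (H&_) ?; auto. Qed.

Lemma ip_lincomb_r z m c b :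
  ip z (lincomb m c b) = vsum m (fun j => c j * ip z (b j)).
Proof.
  unfold inner, lincomb.
  rewrite (vsum_ext n _ (fun i => vsum m (fun j => c j * (z i * b j i)))).
  - rewrite vsum_swap. apply vsum_ext. intros. rewrite vsum_scal. auto.
  - intros. rewrite <- vsum_scal. apply vsum_ext; intros; ring.
Qed.

Lemma lincomb_vec m c b : (forall j, (j < m)%nat -> isvec n (b j)) -> isvec n (lincomb m c b).
Proof. intros H i Hi. unfold lincomb. apply vsum_zero. intros j Hj. rewrite H; auto; ring. Qed.

Lemma Gr_subsp m L : Gr n m L -> subsp L.
Proof.
  intros [b [Hb [Hind HL]]].
  assert (HLf : forall x, L x <-> exists c, x = lincomb m c b).
  { intros x. rewrite HL. split; intros [c Hc]; exists c.
    apply functional_extensionality; auto. rewrite Hc; auto. }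
  split; [split; [|split; [|split]]|].
  - intros x Hx. apply HLf in Hx. destruct Hx as [c ->]. apply lincomb_vec; auto.
  - apply HLf. exists (fun _ => 0). apply functional_extensionality; intros i.
    unfold vzero, lincomb. rewrite vsum_zero; auto. intros; ring.
  - intros x y Hx Hy. apply HLf in Hx, Hy. destruct Hx as [c ->]. destruct Hy as [d ->].
    apply HLf. exists (fun j => c j + d j). apply functional_extensionality; intros i.
    unfold vadd, lincomb. rewrite <- vsum_plus. apply vsum_ext; intros; ring.
  - intros t x Hx. apply HLf in Hx. destruct Hx as [c ->].
    apply HLf. exists (fun j => t * c j). apply functional_extensionality; intros i.
    unfold vscal, lincomb. rewrite <- vsum_scal. apply vsum_ext; intros; ring.
  - intros x.
    destruct (square_surj m (fun k j => ip (b k) (b j))) with (y := fun k => ip (b k) x) as [c Hc].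
    + intros c Hc. apply Hind. set (w := lincomb m c b).
      assert (Hw : isvec n w) by (apply lincomb_vec; auto).
      assert (ip w w = 0).
      { unfold w at 2. rewrite ip_lincomb_r. apply vsum_zero. intros k Hk.
        rewrite ip_comm. unfold w. rewrite ip_lincomb_r.
        rewrite (vsum_ext m (fun j => c j * ip (b k) (b j)) (fun j => ip (b k) (b j) * c j)) by (intros; ring).
        rewrite (Hc k Hk). ring. }
      intros i. destruct (Nat.lt_ge_cases i n).
      * apply (ip_zero_coord n w); auto.
      * apply Hw; auto.
    + exists (lincomb m c b). split.
      * apply HLf; eauto.
      * intros y Hy. apply HLf in Hy. destruct Hy as [d ->].
        rewrite ip_lincomb_r. apply vsum_zero. intros k Hk.
        rewrite ip_subl, ip_comm, (ip_comm n (lincomb m c b)), ip_lincomb_r.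
        rewrite <- (Hc k Hk). rewrite (vsum_ext m (fun j => c j * ip (b k) (b j)) (fun j => ip (b k) (b j) * c j)) by (intros; ring). ring.
Qed.

Lemma perp_lin L : lin (perp n L).
Proof.
  split; [|split; [|split]].
  - intros x [H _]; auto.
  - split. intros i _; reflexivity. intros y _. apply ip_zero_l. auto.
  - intros x y [Hx Hx'] [Hy Hy']. split. apply isvec_vadd; auto.
    intros z Hz. rewrite ip_addl, Hx', Hy'; auto; ring.
  - intros t x [Hx Hx']. split. apply isvec_vscal; auto.
    intros z Hz. rewrite ip_scall, Hx'; auto; ring.
Qed.

Section P.
Variable L : vec -> Prop.
Hypothesis HL : subsp L.

Lemma proj_in x p : is_proj n L x p -> L p.
Proof. intros [H _]; auto. Qed.

Lemma proj_orth x p y : is_proj n L x p -> L y -> ip (vsub x p) y = 0.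
Proof. intros [_ H] Hy; auto. Qed.

Lemma proj_ip x p y : is_proj n L x p -> L y -> ip x y = ip p y.
Proof. intros H Hy. assert (A := proj_orth x p y H Hy). rewrite ip_subl in A. lra. Qed.

Lemma proj_unique x p q : is_proj n L x p -> is_proj n L x q -> p = q.
Proof.
  intros Hp Hq. destruct HL as [Hl _].
  assert (Hd : L (vsub p q)) by (apply lin_sub; eauto using proj_in).
  assert (A := proj_ip x p _ Hp Hd). assert (B := proj_ip x q _ Hq Hd).
  assert (ip (vsub p q) (vsub p q) = 0). { rewrite ip_subl. lra. }
  apply isvec_eq with n; eauto using lin_vec, proj_in.
  intros i Hi. assert (C := ip_zero_coord n _ H i Hi). unfold vsub in C. lra.
Qed.

Lemma proj_pyth x p : is_proj n L x p -> ip x x = ip p p + ip (vsub x p) (vsub x p).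
Proof.
  intros Hp. rewrite ip_expand. rewrite (proj_ip x p p Hp (proj_in x p Hp)). ring.
Qed.

Lemma proj_dist x p v : is_proj n L x p -> L v ->
  ip (vsub x v) (vsub x v) = ip (vsub x p) (vsub x p) + ip (vsub p v) (vsub p v).
Proof.
  intros Hp Hv. destruct HL as [Hl _].
  assert (Hpv : L (vsub p v)) by (apply lin_sub; eauto using proj_in).
  assert (A := proj_orth x p _ Hp Hpv).
  replace (vsub x v) with (vadd (vsub x p) (vsub p v)).
  rewrite ip_addl, !ip_addr. rewrite (ip_comm n (vsub p v) (vsub x p)), A. ring.
  apply functional_extensionality; intros; unfold vadd, vsub; ring.
Qed.

Lemma proj_of_in y : L y -> is_proj n L y y.
Proof. intros Hy. split; auto. intros z Hz. apply ip_zero_l. intros; unfold vsub; ring. Qed.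

Lemma proj_sub x y p q : is_proj n L x p -> is_proj n L y q -> is_proj n L (vsub x y) (vsub p q).
Proof.
  intros Hp Hq. destruct HL as [Hl _]. split. apply lin_sub; eauto using proj_in.
  intros z Hz. replace (vsub (vsub x y) (vsub p q)) with (vsub (vsub x p) (vsub y q)).
  rewrite ip_subl, (proj_orth x p z), (proj_orth y q z); auto; ring.
  apply functional_extensionality; intros; unfold vsub; ring.
Qed.

Lemma proj_scal t x p : is_proj n L x p -> is_proj n L (vscal t x) (vscal t p).
Proof.
  intros Hp. destruct HL as [[_ [_ [_ Hs]]] _]. split. apply Hs; eauto using proj_in.
  intros z Hz. replace (vsub (vscal t x) (vscal t p)) with (vscal t (vsub x p)).
  rewrite ip_scall, (proj_orth x p z); auto; ring.
  apply functional_extensionality; intros; unfold vsub, vscal; ring.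
Qed.

Lemma proj_perp x p : isvec n x -> is_proj n L x p -> perp n L (vsub x p).
Proof.
  intros Hx Hp. split. { apply isvec_vsub; auto. destruct HL as [Hl _]. eapply lin_vec; eauto using proj_in. }
  intros y Hy. eapply proj_orth; eauto.
Qed.

Lemma perp_perp x : isvec n x -> (forall y, perp n L y -> ip x y = 0) -> L x.
Proof.
  intros Hx H. destruct HL as [Hl Hpr]. destruct (Hpr x) as [p Hp].
  assert (Hq := proj_perp x p Hx Hp).
  assert (A := H _ Hq).
  assert (B : ip p (vsub x p) = 0). { rewrite ip_comm. destruct Hq as [_ Hq]. apply Hq. eauto using proj_in. }
  assert (C : ip (vsub x p) (vsub x p) = 0) by (rewrite ip_subl; lra).
  replace x with p. eauto using proj_in.
  apply isvec_eq with n; eauto using lin_vec, proj_in.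
  intros i Hi. assert (D := ip_zero_coord n _ C i Hi). unfold vsub in D. lra.
Qed.

End P.
End Sub.

Lemma small_inv eps : 0 < eps -> exists N, forall k, (N <= k)%nat -> / (INR k + 1) < eps.
Proof.
  intros H. destruct (archimed_cor1 eps H) as [N [HN HN0]]. exists N. intros k Hk.
  apply Rle_lt_trans with (/ INR N); auto.
  apply Rinv_le_contravar. apply lt_0_INR; auto.
  apply le_INR in Hk. lra.
Qed.

Lemma abs_le_inv x B : Rabs x <= B -> -B <= x <= B.
Proof. unfold Rabs; destruct (Rcase_abs x); lra. Qed.

Definition incr (phi : nat -> nat) := forall k, (phi k < phi (S k))%nat.

Lemma incr_ge phi : incr phi -> forall k, (k <= phi k)%nat.
Proof. intros H k. induction k. lia. specialize (H k). lia. Qed.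

Lemma incr_mono phi : incr phi -> forall a b, (a <= b)%nat -> (phi a <= phi b)%nat.
Proof. intros H a b Hab. induction Hab. lia. specialize (H m). lia. Qed.

Lemma incr_comp phi psi : incr phi -> incr psi -> incr (fun k => phi (psi k)).
Proof.
  intros H1 H2 k. assert (A := H2 k). assert (B := incr_mono phi H1 (S (psi k)) (psi (S k)) A).
  specialize (H1 (psi k)). lia.
Qed.

Lemma cv_sub u l phi : incr phi -> Un_cv u l -> Un_cv (fun k => u (phi k)) l.
Proof.
  intros Hp Hu eps He. destruct (Hu eps He) as [N HN]. exists N. intros k Hk.
  apply HN. assert (A := incr_ge phi Hp k). lia.
Qed.

Lemma cv_const c : Un_cv (fun _ => c) c.
Proof. intros eps He. exists O. intros. unfold Rdist. rewrite Rminus_diag, Rabs_R0. lra. Qed.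

Fixpoint mkphi (g : nat -> nat -> nat) (k : nat) : nat :=
  match k with O => g O O | S k' => g (S (mkphi g k')) (S k') end.

Lemma bw1 (u : nat -> R) B : (forall k, Rabs (u k) <= B) ->
  exists phi l, incr phi /\ Un_cv (fun k => u (phi k)) l.
Proof.
  intros HB.
  destruct (Bolzano_Weierstrass u (fun c => -B <= c <= B) (compact_P3 (-B) B)) as [l Hl].
  { intros k. specialize (HB k). apply abs_le_inv in HB. lra. }
  assert (H : forall N k, exists p, (N <= p)%nat /\ Rabs (u p - l) < / (INR k + 1)).
  { intros N k. assert (Hpos : 0 < / (INR k + 1)).
    { apply Rinv_0_lt_compat. assert (A := pos_INR k). lra. }
    destruct (Hl (fun y => Rabs (y - l) < / (INR k + 1)) N) as [p Hp].
    { exists (mkposreal _ Hpos). intros y Hy. unfold disc in Hy. simpl in Hy. auto. }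
    exists p. auto. }
  set (g := fun N k => proj1_sig (constructive_indefinite_description _ (H N k))).
  assert (Hg : forall N k, (N <= g N k)%nat /\ Rabs (u (g N k) - l) < / (INR k + 1)).
  { intros N k. unfold g. destruct (constructive_indefinite_description _ _). simpl. auto. }
  exists (mkphi g), l. split.
  - intros k. simpl. destruct (Hg (S (mkphi g k)) (S k)). lia.
  - intros eps He. destruct (small_inv eps He) as [N HN]. exists N. intros k Hk.
    unfold Rdist. apply Rlt_trans with (/ (INR k + 1)); [|apply HN; lia].
    destruct k; simpl; apply Hg.
Qed.

Definition cc (s : nat -> vec) (l : vec) := forall i, Un_cv (fun k => s k i) (l i).

Lemma bwN N (s : nat -> vec) B : (forall k i, Rabs (s k i) <= B) ->
  exists phi l, incr phi /\ forall i, (i < N)%nat -> Un_cv (fun k => s (phi k) i) (l i).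
Proof.
  intros HB. induction N.
  - exists (fun k => k), vzero. split. intros k; lia. intros; lia.
  - destruct IHN as [phi [l [Hphi Hl]]].
    destruct (bw1 (fun k => s (phi k) N) B) as [psi [a [Hpsi Ha]]]. { intros; apply HB. }
    exists (fun k => phi (psi k)), (fun i => if Nat.eqb i N then a else l i). split.
    + apply incr_comp; auto.
    + intros i Hi. destruct (Nat.eqb_spec i N).
      * subst. auto.
      * apply (cv_sub (fun k => s (phi k) i)). auto. apply Hl. lia.
Qed.

Lemma cc_ip N sx sy lx ly : cc sx lx -> cc sy ly ->
  Un_cv (fun k => inner N (sx k) (sy k)) (inner N lx ly).
Proof.
  intros Hx Hy. unfold inner. induction N; simpl.
  - apply cv_const.
  - apply CV_plus; auto. apply CV_mult; auto.
Qed.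

Lemma coord_le N x i : (i < N)%nat -> x i * x i <= inner N x x.
Proof.
  intros Hi. unfold inner. induction N; [lia|]. simpl.
  destruct (Nat.eq_dec i N).
  - subst. assert (A := vsum_nonneg N (fun i => x i * x i) (fun i _ => Rle_0_sqr (x i))). lra.
  - assert (A := Rle_0_sqr (x N)). unfold Rsqr in A. specialize (IHN ltac:(lia)). lra.
Qed.

Lemma coord_bound N x B : isvec N x -> inner N x x <= B -> forall i, Rabs (x i) <= B + 1.
Proof.
  intros Hx HB i. assert (B0 := ip_nonneg N x).
  destruct (Nat.lt_ge_cases i N).
  - assert (A := coord_le N x i H). unfold Rabs; destruct (Rcase_abs (x i)); nra.
  - rewrite Hx; auto. rewrite Rabs_R0. lra.
Qed.

Definition trunc N (l : vec) : vec := fun i => if Nat.ltb i N then l i else 0.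

Lemma trunc_vec N l : isvec N (trunc N l).
Proof. intros i Hi. unfold trunc. destruct (Nat.ltb_spec i N); [lia|auto]. Qed.

Lemma cc_trunc N s l : (forall k, isvec N (s k)) -> (forall i, (i < N)%nat -> Un_cv (fun k => s k i) (l i)) ->
  cc s (trunc N l).
Proof.
  intros Hs Hl i. unfold trunc. destruct (Nat.ltb_spec i N). auto.
  eapply Un_cv_ext; [|apply cv_const]. intros k. simpl. rewrite Hs; auto.
Qed.

Lemma attain_max N (S : vec -> vec -> Prop) (f : vec -> vec -> R) :
  (exists x v, S x v) ->
  (forall x v, S x v -> isvec N x /\ isvec N v) ->
  (exists B, forall x v, S x v -> inner N x x <= B /\ inner N v v <= B) ->
  (exists M, forall x v, S x v -> f x v <= M) ->
  (forall sx sv lx lv, (forall k, S (sx k) (sv k)) -> isvec N lx -> isvec N lv ->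
     cc sx lx -> cc sv lv -> S lx lv /\ Un_cv (fun k => f (sx k) (sv k)) (f lx lv)) ->
  exists x v, S x v /\ forall y w, S y w -> f y w <= f x v.
Proof.
  intros [x0 [v0 H0]] Hvec [B HB] [M HM] Hcl.
  set (E := fun r => exists x v, S x v /\ r = f x v).
  destruct (completeness E) as [M0 [Hub Hlub]].
  { exists M. intros r [x [v [Hs ->]]]. auto. }
  { exists (f x0 v0). exists x0, v0. auto. }
  assert (Hk : forall k, exists p, S (fst p) (snd p) /\ M0 - / (INR k + 1) < f (fst p) (snd p)).
  { intros k. apply NNPP. intros C.
    assert (Hpos : 0 < / (INR k + 1)) by (apply Rinv_0_lt_compat; assert (A := pos_INR k); lra).
    assert (M0 <= M0 - / (INR k + 1)); [|lra].
    apply Hlub. intros r [x [v [Hs ->]]]. apply Rnot_lt_le. intros D. apply C. exists (x, v). auto. }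
  set (sq := fun k => proj1_sig (constructive_indefinite_description _ (Hk k))).
  assert (Hsq : forall k, S (fst (sq k)) (snd (sq k)) /\ M0 - / (INR k + 1) < f (fst (sq k)) (snd (sq k))).
  { intros k. unfold sq. destruct (constructive_indefinite_description _ _). simpl. auto. }
  set (sx := fun k => fst (sq k)). set (sv := fun k => snd (sq k)).
  assert (HBv : forall k i, Rabs (sx k i) <= B + 1 /\ Rabs (sv k i) <= B + 1).
  { intros k i. destruct (Hsq k) as [Hs _]. destruct (Hvec _ _ Hs). destruct (HB _ _ Hs).
    split; eapply coord_bound; eauto. }
  destruct (bwN N sx (B+1)) as [phi [lx0 [Hphi Hlx]]]. { intros; apply HBv. }
  destruct (bwN N (fun k => sv (phi k)) (B+1)) as [psi [lv0 [Hpsi Hlv]]]. { intros; apply HBv. }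
  set (chi := fun k => phi (psi k)).
  assert (Hchi : incr chi) by (unfold chi; apply (incr_comp phi psi); auto).
  assert (P1 : forall k, S (sx (chi k)) (sv (chi k))) by (intros k; apply Hsq).
  assert (P4 : cc (fun k => sx (chi k)) (trunc N lx0)).
  { apply cc_trunc. intros k. apply (Hvec _ _ (proj1 (Hsq _))).
    intros i Hi. apply (cv_sub (fun k => sx (phi k) i)); auto. }
  assert (P5 : cc (fun k => sv (chi k)) (trunc N lv0)).
  { apply cc_trunc. intros k. apply (Hvec _ _ (proj1 (Hsq _))). auto. }
  destruct (Hcl _ _ _ _ P1 (trunc_vec N lx0) (trunc_vec N lv0) P4 P5) as [HS Hf].
  {
  exists (trunc N lx0), (trunc N lv0). split; auto.
    assert (Hle : f (trunc N lx0) (trunc N lv0) <= M0). { apply Hub. eexists _, _; eauto. }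
    assert (Hge : M0 <= f (trunc N lx0) (trunc N lv0)).
    { apply Rnot_lt_le. intros C. set (F := f (trunc N lx0) (trunc N lv0)) in *.
      destruct (Hf ((M0 - F)/2) ltac:(lra)) as [N1 HN1].
      destruct (small_inv ((M0 - F)/2) ltac:(lra)) as [N2 HN2].
      specialize (HN1 (max N1 N2) ltac:(lia)). specialize (HN2 (chi (max N1 N2))).
      assert (A := incr_ge chi Hchi (max N1 N2)). specialize (HN2 ltac:(lia)).
      destruct (Hsq (chi (max N1 N2))) as [_ Hlt]. unfold Rdist in HN1.
      apply Rabs_def2 in HN1. unfold sx, sv in HN1. lra. }
    intros y w Hyw. apply Rle_trans with M0. apply Hub. exists y, w; auto. lra.
  }
Qed.

Lemma cc_sub s l : cc s l -> cc (fun k => vsub (s k) l) (vsub l l).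
Proof. intros H i. unfold vsub. apply CV_minus; auto. apply cv_const. Qed.

Lemma cc_dist N s l : cc s l -> Un_cv (fun k => inner N (vsub (s k) l) (vsub (s k) l)) 0.
Proof.
  intros H. assert (A := cc_ip N _ _ _ _ (cc_sub s l H) (cc_sub s l H)).
  replace 0 with (inner N (vsub l l) (vsub l l)); auto.
  apply ip_zero_l. intros; unfold vsub; ring.
Qed.

Lemma closed_cc N K s l : Defs.closed_set N K -> (forall k, K (s k)) -> isvec N l -> cc s l -> K l.
Proof.
  intros HK Hs Hl Hc. apply HK; auto. intros eps He.
  destruct (cc_dist N s l Hc (eps * eps) ltac:(nra)) as [k Hk].
  specialize (Hk k (le_n _)). unfold Rdist in Hk. rewrite Rminus_0_r in Hk.
  exists (s k). split; auto.
  assert (E : inner N (vsub l (s k)) (vsub l (s k)) = inner N (vsub (s k) l) (vsub (s k) l)).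
  { rewrite !ip_expand. rewrite (ip_comm N l (s k)). ring. }
  assert (F := ip_nonneg N (vsub (s k) l)). rewrite Rabs_pos_eq in Hk by auto.
  unfold norm2. rewrite E. rewrite <- (sqrt_square eps) by lra.
  apply sqrt_lt_1_alt. lra.
Qed.

Lemma cc_ip_eq N s l c : cc s l -> (forall k, inner N (s k) (s k) = c) -> inner N l l = c.
Proof.
  intros H Hc. apply (UL_sequence (fun k => inner N (s k) (s k))). apply cc_ip; auto.
  eapply Un_cv_ext; [|apply cv_const]. intros; simpl; auto.
Qed.

Lemma acos_anti q c : -1 <= q -> q <= c -> c <= 1 -> acos c <= acos q.
Proof.
  intros H1 H2 H3. apply Rnot_lt_le. intros C.
  destruct (acos_bound q). destruct (acos_bound c).
  assert (D := cos_decreasing_1 _ _ H H0 H4 H5 C).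
  rewrite !cos_acos in D by lra. lra.
Qed.

Section Angle.
Variable n : nat.
Notation ip := (inner n).
Notation nrm := (nrm n).
Variables A C : vec -> Prop.
Hypothesis HAv : forall x, A x -> isvec n x.
Hypothesis HCv : forall x, C x -> isvec n x.
Hypothesis HAs : forall t x, 0 < t -> A x -> A (vscal t x).
Hypothesis HCs : forall t x, 0 < t -> C x -> C (vscal t x).
Hypothesis HAn : forall x, A x -> A (vscal (-1) x).
Hypothesis HAc : forall s l, (forall k, A (s k)) -> isvec n l -> cc s l -> A l.
Hypothesis HCc : forall s l, (forall k, C (s k)) -> isvec n l -> cc s l -> C l.
Hypothesis HAne : exists x, A x /\ ip x x = 1.
Hypothesis HCne : exists x, C x /\ ip x x = 1.

Lemma angle_main : exists c, 0 <= c <= 1 /\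
  (exists x0 v0, A x0 /\ C v0 /\ ip x0 x0 = 1 /\ ip v0 v0 = 1 /\ ip x0 v0 = c) /\
  (forall x v, A x -> C v -> ip x v <= c * nrm x * nrm v) /\
  is_min (angle_set n A C) (acos c).
Proof.
  set (S := fun x v => A x /\ C v /\ ip x x = 1 /\ ip v v = 1).
  destruct (attain_max n S (fun x v => ip x v)) as [x0 [v0 [[Ax [Cv [Ux Uv]]] Hmax]]].
  - destruct HAne as [x [? ?]]. destruct HCne as [v [? ?]]. exists x, v. repeat split; auto.
  - intros x v [? [? _]]. auto.
  - exists 1. intros x v [_ [_ [-> ->]]]. lra.
  - exists 1. intros x v [_ [_ [Hx Hv]]]. assert (D := cauchy_schwarz n x v).
    rewrite (proj2 (nrm_unit n x)), (proj2 (nrm_unit n v)) in D; auto. lra.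
  - intros sx sv lx lv Hs Hlx Hlv Hcx Hcv. split.
    + repeat split.
      * apply (HAc sx); auto. intros k; apply Hs.
      * apply (HCc sv); auto. intros k; apply Hs.
      * apply (cc_ip_eq n sx); auto. intros k; apply Hs.
      * apply (cc_ip_eq n sv); auto. intros k; apply Hs.
    + apply cc_ip; auto.
  - set (c := ip x0 v0).
    assert (nx : nrm x0 = 1) by (apply nrm_unit; auto).
    assert (nv : nrm v0 = 1) by (apply nrm_unit; auto).
    assert (Hc1 : c <= 1) by (assert (D := cauchy_schwarz n x0 v0); rewrite nx, nv in D; unfold c; lra).
    assert (Hc0 : 0 <= c).
    { assert (D := Hmax (vscal (-1) x0) v0). unfold S in D.
      rewrite ip_scall, ip_scalr, ip_scall in D. unfold c.
      assert (D' : -1 * ip x0 v0 <= ip x0 v0) by (apply D; repeat split; auto; lra). lra. }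
    assert (Hii : forall x v, A x -> C v -> ip x v <= c * nrm x * nrm v).
    { intros x v Hx Hv.
      destruct (nrm_nonneg n x) as [px|px]; [destruct (nrm_nonneg n v) as [pv|pv]|].
      - set (x' := vscal (/ nrm x) x). set (v' := vscal (/ nrm v) v).
        assert (D := Hmax x' v'). fold c in D.
        assert (Ex : ip x' x' = 1).
        { apply nrm_unit. apply normalize. apply nrm_pos_nonzero; auto. }
        assert (Ev : ip v' v' = 1).
        { apply nrm_unit. apply normalize. apply nrm_pos_nonzero; auto. }
        assert (D' : ip x' v' <= c).
        { apply D. unfold S. repeat split; auto.
          apply HAs; auto. apply Rinv_0_lt_compat; auto. apply HCs; auto. apply Rinv_0_lt_compat; auto. }
        unfold x', v' in D'. rewrite ip_scall, ip_scalr in D'.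
        assert (D2 : ip x v = (nrm x * nrm v) * (/ nrm x * (/ nrm v * ip x v))) by (field; lra).
        rewrite D2. replace (c * nrm x * nrm v) with ((nrm x * nrm v) * c) by ring.
        apply Rmult_le_compat_l; [nra|]. lra.
      - assert (D := cauchy_schwarz n x v). rewrite <- pv in *. nra.
      - assert (D := cauchy_schwarz n x v). rewrite <- px in *. nra. }
    exists c. split; [lra|]. split; [exists x0, v0; auto|]. split; auto.
    split.
    + exists x0, v0. repeat split; auto.
      apply nrm_pos_nonzero. rewrite nx; lra.
      apply nrm_pos_nonzero. rewrite nv; lra.
      unfold angle. fold (gnrm n x0). fold (gnrm n v0). rewrite nx, nv. f_equal. unfold c. field.
    + intros r [x [v [Hx [nzx [Hv [nzv ->]]]]]]. unfold angle.
      fold (gnrm n x). fold (gnrm n v).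
      assert (px := nonzero_nrm n x nzx). assert (pv := nonzero_nrm n v nzv).
      assert (D := Hii x v Hx Hv). assert (D2 := cauchy_schwarz_abs n x v).
      apply acos_anti; auto.
      * apply (Rmult_le_reg_r (nrm x * nrm v)). nra. unfold Rdiv. rewrite Rmult_assoc, Rinv_l by nra. lra.
      * apply (Rmult_le_reg_r (nrm x * nrm v)). nra. unfold Rdiv. rewrite Rmult_assoc, Rinv_l by nra. lra.
Qed.
End Angle.

Definition e0 : vec := fun i => if Nat.eqb i 0 then 1 else 0.

Section Misc.
Variable n : nat.
Hypothesis Hn : (1 <= n)%nat.
Notation ip := (inner n).
Notation nrm := (nrm n).

Lemma e0_vec : isvec n e0.
Proof. intros i Hi. unfold e0. destruct (Nat.eqb_spec i 0); [lia|auto]. Qed.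

Lemma e0_ip x : ip x e0 = x 0%nat.
Proof.
  unfold inner, e0. rewrite (vsum_ext n _ (fun i => if Nat.eqb i 0 then x 0%nat else 0)).
  apply vsum_delta; lia. intros i _. destruct (Nat.eqb_spec i 0); subst; ring.
Qed.

Lemma e0_unit : ip e0 e0 = 1.
Proof. rewrite e0_ip. reflexivity. Qed.

Lemma zero_or_nonzero x : Defs.nonzero n x \/ forall i, (i < n)%nat -> x i = 0.
Proof.
  destruct (classic (Defs.nonzero n x)); auto. right. intros i Hi.
  apply NNPP; intros C. apply H. exists i; auto.
Qed.

Lemma dualnorm_nrm u : isvec n u -> dualnorm_is n u (nrm u).
Proof.
  intros Hu. split.
  - destruct (zero_or_nonzero u) as [nz|z].
    + exists (vscal (/ nrm u) u). split. apply isvec_vscal; auto. split. apply normalize; auto.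
      assert (p := nonzero_nrm n u nz). rewrite ip_scalr, <- nrm_sq. field. lra.
    + exists e0. split. apply e0_vec. split. apply nrm_unit, e0_unit.
      rewrite e0_ip, z by lia. apply nrm_eq. lra. rewrite ip_zero_l; auto. ring.
  - intros s [x [_ [Hx ->]]]. assert (D := cauchy_schwarz n u x). unfold gnrm at 2 in D.
    rewrite Hx in D. lra.
Qed.

Lemma is_max_unique S a b : is_max S a -> is_max S b -> a = b.
Proof. intros [Ha Ha'] [Hb Hb']. apply Ha' in Hb. apply Hb' in Ha. lra. Qed.

Lemma interior_nonzero K x : vinterior n K x -> exists y, K y /\ Defs.nonzero n y /\ isvec n y.
Proof.
  intros [Hx [eps [He HK]]]. destruct (zero_or_nonzero x) as [nz|z].
  - exists x. split; auto. apply HK; auto. unfold norm2. rewrite ip_zero_l. rewrite sqrt_0; lra.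
    intros; unfold vsub; ring.
  - exists (vscal (eps/2) e0). split; [|split].
    + apply HK. apply isvec_vscal, e0_vec.
      unfold norm2. replace (ip (vsub (vscal (eps / 2) e0) x) (vsub (vscal (eps / 2) e0) x))
        with (ip (vscal (eps / 2) e0) (vscal (eps / 2) e0)).
      rewrite ip_scall, ip_scalr, e0_unit. apply Rlt_le_trans with (sqrt (eps * eps)).
      apply sqrt_lt_1_alt. nra. rewrite sqrt_square; lra.
      unfold inner. apply vsum_ext. intros i Hi. unfold vsub. rewrite (z i Hi). ring.
    + exists 0%nat. split. lia. unfold vscal, e0. simpl. lra.
    + apply isvec_vscal, e0_vec.
Qed.

Lemma unit_of {L : vec -> Prop} x : (forall t y, 0 < t -> L y -> L (vscal t y)) ->
  L x -> Defs.nonzero n x -> exists y, L y /\ ip y y = 1.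
Proof.
  intros Hs Hx nz. exists (vscal (/ nrm x) x). split.
  apply Hs; auto. apply Rinv_0_lt_compat, nonzero_nrm; auto.
  apply nrm_unit, normalize; auto.
Qed.

Lemma cc_constv x : cc (fun _ => x) x.
Proof. intros i. apply cv_const. Qed.

Lemma cone_scal K : regular_cone n K -> forall t x, 0 < t -> K x -> K (vscal t x).
Proof. intros (_&_&HK&_) t x Ht Hx. apply HK; auto. lra. Qed.

Lemma dual_scal K : forall t x, 0 < t -> dual_cone n K x -> dual_cone n K (vscal t x).
Proof.
  intros t x Ht [Hx Hx']. split. apply isvec_vscal; auto.
  intros y Hy. rewrite ip_scall. specialize (Hx' y Hy). nra.
Qed.

Lemma dual_closed K s l : (forall k, dual_cone n K (s k)) -> isvec n l -> cc s l -> dual_cone n K l.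
Proof.
  intros Hs Hl Hc. split; auto. intros x Hx. apply Rle_ge.
  apply (@Rle_cv_lim (fun _ => 0) (fun k => ip (s k) x)).
  intros k. apply Rge_le, (proj2 (Hs k)); auto. apply cv_const.
  apply cc_ip; auto. apply cc_constv.
Qed.

Lemma perp_closed L s l : (forall k, perp n L (s k)) -> isvec n l -> cc s l -> perp n L l.
Proof.
  intros Hs Hl Hc. split; auto. intros y Hy.
  apply (UL_sequence (fun k => ip (s k) y)). apply cc_ip; auto. apply cc_constv.
  eapply Un_cv_ext; [|apply cv_const]. intros k. simpl. symmetry. apply (proj2 (Hs k)); auto.
Qed.

Lemma sub_closed L s l : subsp n L -> (forall k, L (s k)) -> isvec n l -> cc s l -> L l.
Proof.
  intros HL Hs Hl Hc. apply perp_perp with n; auto. intros y Hy.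
  apply (UL_sequence (fun k => ip (s k) y)). apply cc_ip; auto. apply cc_constv.
  eapply Un_cv_ext; [|apply cv_const]. intros k. simpl. rewrite ip_comm. symmetry. apply (proj2 Hy); auto.
Qed.

Lemma Gr_unit m L : Gr n m L -> (1 <= m)%nat -> exists x, L x /\ ip x x = 1.
Proof.
  intros HG Hm. assert (HL := Gr_subsp n m L HG). destruct HL as [[Hv [_ [_ Hs]]] _].
  destruct HG as [b [Hb [Hind HLx]]].
  assert (E : forall i, lincomb m e0 b i = b 0%nat i).
  { intros i. unfold lincomb. rewrite (vsum_ext m _ (fun j => if Nat.eqb j 0 then b 0%nat i else 0)).
    apply vsum_delta; lia. intros j _. unfold e0. destruct (Nat.eqb_spec j 0); subst; ring. }
  assert (Lb : L (b 0%nat)). { apply HLx. exists e0. intros; rewrite E; auto. }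
  apply (unit_of (b 0%nat)); auto.
  destruct (zero_or_nonzero (b 0%nat)) as [|z]; auto. exfalso.
  assert (e0 0%nat = 0). { apply Hind; [|lia]. intros i. rewrite E. destruct (Nat.lt_ge_cases i n).
    apply z; auto. apply (Hb 0%nat); auto; lia. }
  unfold e0 in H. simpl in H. lra.
Qed.

Lemma perp_unit m L : Gr n m L -> (m < n)%nat -> exists x, perp n L x /\ ip x x = 1.
Proof.
  intros HG Hm. assert (HL := Gr_subsp n m L HG).
  destruct HG as [b [Hb [Hind HLx]]].
  destruct (homog n (map b (seq 0 m))) as [c [[j [Hj Hcj]] Hc]].
  { rewrite length_map, length_seq. auto. }
  set (y := trunc n c).
  assert (Hy : perp n L y).
  { split. apply trunc_vec. intros z Hz. apply HLx in Hz. destruct Hz as [d Hd].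
    replace z with (lincomb m d b) by (apply functional_extensionality; intros; auto).
    rewrite ip_lincomb_r. apply vsum_zero. intros k Hk.
    rewrite ip_comm. unfold inner, y, trunc.
    rewrite (vsum_ext n _ (fun i => b k i * c i)).
    rewrite (Hc (b k)). ring.
    apply (in_map b). apply in_seq. lia.
    intros i Hi. destruct (Nat.ltb_spec i n); [auto|lia]. }
  apply (unit_of y); auto.
  intros t x Ht Hx. apply (perp_lin n L); auto.
  exists j. split; auto. unfold y, trunc. destruct (Nat.ltb_spec j n); [auto|lia].
Qed.

End Misc.

Section Sep.
Variable n : nat.
Hypothesis Hn : (1 <= n)%nat.
Notation ip := (inner n).
Notation nrm := (nrm n).

Lemma par_ineq x z : ip x x <= 2 * ip (vsub x z) (vsub x z) + 2 * ip z z.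
Proof.
  assert (A := ip_nonneg n (vsub x (vscal 2 z))).
  rewrite ip_expand, ip_scalr, ip_scall, ip_scalr in A. rewrite ip_expand. lra.
Qed.

Lemma dual_nonzero K : regular_cone n K -> exists u, dual_cone n K u /\ ip u u = 1.
Proof.
  intros HK. pose proof HK as (Kv & K0 & Ks & Ka & Kc & Kp & Ki).
  destruct Ki as [x0 Hx0]. destruct (interior_nonzero n Hn K x0 Hx0) as [k0 [Kk0 [nz0 _]]].
  set (z := vscal (-1) k0).
  assert (Hz : ~ K z).
  { intros Kz. destruct nz0 as [i [Hi Hk]]. apply Hk. apply (Kp k0); auto.
    replace (fun i => - k0 i) with z; auto. apply functional_extensionality; intros; unfold z, vscal; ring. }
  assert (zv : isvec n z) by (apply isvec_vscal; auto).
  set (S := fun x v => K x /\ ip (vsub x z) (vsub x z) <= ip z z /\ v = vzero).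
  destruct (attain_max n S (fun x _ => - ip (vsub x z) (vsub x z))) as [p [w [[Kp' [Hpb _]] Hmin]]].
  - exists vzero, vzero. split; [auto|split; [|reflexivity]]. right.
    unfold inner, vsub, vzero. apply vsum_ext; intros; ring.
  - intros x v [Kx [_ ->]]. split; auto; intros i _; reflexivity.
  - exists (4 * ip z z). intros x v [Kx [Hb ->]]. assert (D := par_ineq x z).
    assert (D2 := ip_nonneg n z). split. lra. rewrite ip_zero_l. lra. intros; reflexivity.
  - exists 0. intros x v _. assert (D := ip_nonneg n (vsub x z)). lra.
  - intros sx sv lx lv Hs Hlx Hlv Hcx Hcv.
    assert (Hcz : cc (fun k => vsub (sx k) z) (vsub lx z)).
    { intros i. unfold vsub. apply CV_minus; auto. apply cv_const. }
    split; [split; [|split]|].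
    + apply (closed_cc n K sx); auto. intros k; apply Hs.
    + apply (@Rle_cv_lim (fun k => ip (vsub (sx k) z) (vsub (sx k) z)) (fun _ => ip z z)).
      intros k; apply Hs. apply cc_ip; auto. apply cv_const.
    + apply functional_extensionality; intros i. apply (UL_sequence (fun k => sv k i)); auto.
      eapply Un_cv_ext; [|apply cv_const]. intros k. simpl. destruct (Hs k) as [_ [_ ->]]. reflexivity.
    + apply (CV_opp (fun k => ip (vsub (sx k) z) (vsub (sx k) z))). apply cc_ip; auto.
  - set (u := vsub p z).
    assert (Hmin' : forall k, K k -> ip u u <= ip (vsub k z) (vsub k z)).
    { intros k Kk. destruct (Rle_dec (ip (vsub k z) (vsub k z)) (ip z z)).
      - assert (D := Hmin k vzero ltac:(split; auto)). unfold u. lra.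
      - unfold u. lra. }
    assert (uv : isvec n u) by (apply isvec_vsub; auto).
    assert (Hd : dual_cone n K u).
    { split; auto. intros k Kk. apply Rle_ge. apply Rnot_lt_le. intros C.
      set (a := ip u k). set (q := ip k k). assert (q0 := ip_nonneg n k). fold q in q0. assert (an : a < 0) by exact C.
      set (t := - a / (q + 1)).
      assert (tp : 0 < t) by (unfold t; apply Rdiv_lt_0_compat; lra).
      assert (D := Hmin' (vadd p (vscal t k)) (Ka _ _ Kp' (Ks k t Kk ltac:(lra)))).
      replace (vsub (vadd p (vscal t k)) z) with (vadd u (vscal t k)) in D
        by (apply functional_extensionality; intros; unfold u, vadd, vsub, vscal; ring).
      rewrite ip_addl, !ip_addr, !ip_scall, !ip_scalr, (ip_comm n k u) in D. fold a q in D.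
      assert (E : t * q < - a).
      { unfold t. apply Rmult_lt_reg_r with (q + 1). lra.
        replace (- a / (q + 1) * q * (q + 1)) with (- a * q) by (field; lra). nra. }
      nra. }
    apply (unit_of n u). apply dual_scal. auto.
    destruct (zero_or_nonzero n u) as [|zz]; auto. exfalso. apply Hz.
    replace z with p; auto. apply isvec_eq with n; auto. intros i Hi. specialize (zz i Hi).
    unfold u, vsub in zz. lra.
Qed.
End Sep.

Lemma sin_acos' c : 0 <= c <= 1 -> sin (acos c) = sqrt (1 - c * c).
Proof. intros H. rewrite sin_acos by lra. unfold Rsqr. auto. Qed.

Lemma part_c n m K : (1 <= m)%nat -> (m < n)%nat -> regular_cone n K ->
  forall L, Gr n m L ->
     exists a, is_min (angle_set n L K) a /\ is_min (nubar_set n K L) (sin a).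
Proof.
  intros Hm Hmn HK L HG. assert (Hn : (1 <= n)%nat) by lia.
  assert (HL := Gr_subsp n m L HG). pose proof HL as [[Lv [L0 [La Ls]]] _].
  pose proof HK as (Kv & K0 & Ks & Ka & Kc & Kp & [x0 Ki]).
  assert (H1 : forall t x, 0 < t -> K x -> K (vscal t x)) by (intros; apply (cone_scal n K HK); auto).
  assert (H2 : forall s l, (forall k, L (s k)) -> isvec n l -> cc s l -> L l)
    by (intros; apply (sub_closed n L s); auto).
  assert (H3 : forall s l, (forall k, K (s k)) -> isvec n l -> cc s l -> K l)
    by (intros; apply (closed_cc n K s); auto).
  assert (H4 := Gr_unit n Hn m L HG Hm).
  assert (H5 : exists x, K x /\ inner n x x = 1).
  { destruct (interior_nonzero n Hn K x0 Ki) as [y [Ky [nz _]]].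
    apply (unit_of n y); auto. }
  assert (H6 : forall t x, 0 < t -> L x -> L (vscal t x)) by auto.
  assert (H7 : forall x, L x -> L (vscal (-1) x)) by auto.
  destruct (angle_main n L K Lv Kv H6 H1 H7 H2 H3 H4 H5)
    as [c [Hc [[x [v [Lx [Kv' [Ux [Uv Exv]]]]]] [Hii Hang]]]].
  exists (acos c). split; auto. rewrite sin_acos' by auto. split.
    + exists (vscal c v), x. split. apply Ks; auto; lra. split; auto. split. apply nrm_unit; auto.
      unfold norm2. f_equal. rewrite ip_expand, !ip_scall, !ip_scalr, (ip_comm n v x), Exv, Ux, Uv. ring.
    + intros r [w [y [Kw [Ly [Uy ->]]]]]. unfold norm2. apply sqrt_le_1_alt.
      assert (D := Hii y w Ly Kw). replace (gnrm n y) with 1 in D by (symmetry; exact Uy).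
      assert (Uy' : inner n y y = 1) by (apply nrm_unit; auto).
      rewrite ip_expand, (ip_comm n w y), Uy', <- (nrm_sq n w).
      assert (0 <= (gnrm n w - c) * (gnrm n w - c)) by apply Rle_0_sqr. nra.
Qed.

Lemma part_b n m K : (1 <= m)%nat -> (m < n)%nat -> regular_cone n K ->
  forall L, Gr n m L ->
     exists a, is_min (angle_set n (perp n L) (dual_cone n K)) a /\ is_min (nu_set n K L) (sin a).
Proof.
  intros Hm Hmn HK L HG. assert (Hn : (1 <= n)%nat) by lia.
  assert (HP := perp_lin n L). pose proof HP as [Pv [P0 [Pa Ps]]].
  assert (H1 : forall x, perp n L x -> isvec n x) by (intros x [Hx _]; auto).
  assert (H2 : forall x, dual_cone n K x -> isvec n x) by (intros x [Hx _]; auto).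
  assert (H3 : forall t x, 0 < t -> perp n L x -> perp n L (vscal t x)) by (intros; apply Ps; auto).
  assert (H4 : forall t x, 0 < t -> dual_cone n K x -> dual_cone n K (vscal t x)) by (intros; apply dual_scal; auto).
  assert (H5 : forall x, perp n L x -> perp n L (vscal (-1) x)) by (intros; apply Ps; auto).
  assert (H6 : forall s l, (forall k, perp n L (s k)) -> isvec n l -> cc s l -> perp n L l)
    by (intros; apply (perp_closed n L s); auto).
  assert (H7 : forall s l, (forall k, dual_cone n K (s k)) -> isvec n l -> cc s l -> dual_cone n K l)
    by (intros; apply (dual_closed n K s); auto).
  assert (H8 := perp_unit n Hn m L HG Hmn).
  assert (H9 := dual_nonzero n Hn K HK).
  destruct (angle_main n (perp n L) (dual_cone n K) H1 H2 H3 H4 H5 H6 H7 H8 H9)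
    as [c [Hc [[x [v [Px [Dv [Ux [Uv Exv]]]]]] [Hii Hang]]]].
  exists (acos c). split; auto. rewrite sin_acos' by auto.
    assert (Hvv : isvec n v) by (apply (proj1 Dv)).
    split.
    + exists v, (vscal c x). split; auto. split. apply Ps; auto. split.
      * replace 1 with (nrm n v) by (apply nrm_unit; auto). apply dualnorm_nrm; auto.
      * replace (sqrt (1 - c * c)) with (nrm n (vsub (vscal c x) v))
          by (unfold gnrm, norm2; f_equal; rewrite ip_expand, !ip_scall, !ip_scalr, Exv, Ux, Uv; ring).
        apply dualnorm_nrm; auto. apply isvec_vsub; [apply isvec_vscal, Pv|]; auto.
    + intros r [u [y [Du [Py [Hu Hr]]]]].
      assert (uv : isvec n u) by (apply (proj1 Du)).
      assert (yv : isvec n y) by (apply Pv; auto).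
      assert (E1 := is_max_unique _ _ _ Hu (dualnorm_nrm n Hn u uv)).
      assert (E2 := is_max_unique _ _ _ Hr (dualnorm_nrm n Hn _ (isvec_vsub n _ _ yv uv))).
      rewrite E2. unfold gnrm, norm2. apply sqrt_le_1_alt.
      assert (D := Hii y u Py Du). rewrite <- E1 in D.
      assert (Uu' : inner n u u = 1) by (apply nrm_unit; auto).
      rewrite ip_expand, Uu', <- (nrm_sq n y).
      assert (0 <= (gnrm n y - c) * (gnrm n y - c)) by apply Rle_0_sqr. nra.
Qed.

Lemma ip_lincomb_l n z m c b :
  inner n (lincomb m c b) z = vsum m (fun j => c j * inner n (b j) z).
Proof.
  rewrite ip_comm, ip_lincomb_r. apply vsum_ext; intros; rewrite ip_comm; auto.
Qed.

Lemma Gr_onto n m L1 L2 : Gr n m L1 -> Gr n m L2 ->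
  (forall x, L1 x -> (forall z, L2 z -> inner n x z = 0) -> x = vzero) ->
  forall y, L2 y -> exists x, L1 x /\ forall z, L2 z -> inner n (vsub x y) z = 0.
Proof.
  intros [b1 [Hb1 [Hind1 HL1]]] [b2 [Hb2 [Hind2 HL2]]] Hinj y Hy.
  assert (Horth : forall x, (forall k, (k < m)%nat -> inner n x (b2 k) = 0) -> forall z, L2 z -> inner n x z = 0).
  { intros x Hx z Hz. apply HL2 in Hz. destruct Hz as [d Hd].
    replace z with (lincomb m d b2) by (apply functional_extensionality; intros; auto).
    rewrite ip_lincomb_r. apply vsum_zero. intros k Hk. rewrite Hx; auto; ring. }
  destruct (square_surj m (fun k j => inner n (b1 j) (b2 k))) with (y := fun k => inner n y (b2 k)) as [c Hc].
  - intros c Hc. apply Hind1. intros i.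
    assert (E : lincomb m c b1 = vzero).
    { apply Hinj. apply HL1. exists c; auto.
      apply Horth. intros k Hk. rewrite ip_lincomb_l. rewrite <- (Hc k Hk). apply vsum_ext; intros; ring. }
    rewrite E. reflexivity.
  - exists (lincomb m c b1). split. apply HL1. exists c; auto.
    apply Horth. intros k Hk. rewrite ip_subl, ip_lincomb_l.
    rewrite (vsum_ext m _ (fun j => inner n (b1 j) (b2 k) * c j)) by (intros; ring).
    rewrite (Hc k Hk). ring.
Qed.

Definition pj n L (H : subsp n L) (x : vec) : vec :=
  proj1_sig (constructive_indefinite_description _ (proj2 H x)).

Lemma pj_spec n L H x : is_proj n L x (pj n L H x).
Proof. unfold pj. destruct (constructive_indefinite_description _ _). simpl. auto. Qed.

Lemma abs_le_sqrt a b : a * a <= b -> Rabs a <= sqrt b.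
Proof. intros H. rewrite <- sqrt_Rsqr_abs. apply sqrt_le_1_alt. unfold Rsqr. auto. Qed.

Lemma pj_cc n L H s l : cc s l -> cc (fun k => pj n L H (s k)) (pj n L H l).
Proof.
  intros Hc i. pose proof H as [Hl _].
  destruct (Nat.lt_ge_cases i n) as [Hi|Hi].
  - intros eps He. destruct (cc_dist n s l Hc (eps * eps) ltac:(nra)) as [N HN].
    exists N. intros k Hk. specialize (HN k Hk). unfold Rdist in *. rewrite Rminus_0_r in HN.
    assert (E : vsub (pj n L H (s k)) (pj n L H l) = pj n L H (vsub (s k) l)).
    { eapply proj_unique; eauto. apply proj_sub; auto; apply pj_spec. apply pj_spec. }
    set (w := vsub (s k) l) in *.
    assert (D1 := coord_le n (pj n L H w) i Hi).
    assert (D2 := proj_pyth n L w _ (pj_spec n L H w)).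
    assert (D3 := ip_nonneg n (vsub w (pj n L H w))).
    assert (D4 := ip_nonneg n w). rewrite Rabs_pos_eq in HN by auto.
    replace (pj n L H (s k) i - pj n L H l i) with (pj n L H w i)
      by (rewrite <- E; reflexivity).
    apply Rle_lt_trans with (sqrt (inner n w w)). apply abs_le_sqrt. lra.
    apply Rlt_le_trans with (sqrt (eps * eps)). apply sqrt_lt_1_alt; lra. rewrite sqrt_square; lra.
  - eapply Un_cv_ext; [|apply cv_const]. intros k. simpl.
    rewrite !(lin_vec n L _ Hl); auto; apply (proj1 (pj_spec n L H _)).
Qed.

Definition Dist n L (H : subsp n L) x := inner n (vsub x (pj n L H x)) (vsub x (pj n L H x)).

Section D.
Variable n : nat.
Variable L : vec -> Prop.
Hypothesis H : subsp n L.
Notation ip := (inner n).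
Notation P := (pj n L H).

Lemma Dist_pyth x : ip x x = ip (P x) (P x) + Dist n L H x.
Proof. apply (proj_pyth n L x (P x) (pj_spec n L H x)). Qed.

Lemma Dist_nonneg x : 0 <= Dist n L H x.
Proof. apply ip_nonneg. Qed.

Lemma P_scal t x : P (vscal t x) = vscal t (P x).
Proof. eapply proj_unique; eauto. apply pj_spec. apply proj_scal; auto. apply pj_spec. Qed.

Lemma Dist_scal t x : Dist n L H (vscal t x) = t * t * Dist n L H x.
Proof.
  unfold Dist. rewrite P_scal.
  replace (vsub (vscal t x) (vscal t (P x))) with (vscal t (vsub x (P x)))
    by (apply functional_extensionality; intros; unfold vsub, vscal; ring).
  rewrite ip_scall, ip_scalr. ring.
Qed.

Lemma P_of_in y : L y -> P y = y.
Proof. intros Hy. eapply proj_unique; eauto. apply pj_spec. apply proj_of_in; auto. Qed.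

Lemma P_eq x y : is_proj n L x y -> P x = y.
Proof. intros Hy. eapply proj_unique; eauto. apply pj_spec. Qed.

End D.

Lemma Dist_max n L1 L2 (H1 : subsp n L1) (H2 : subsp n L2) :
  (exists x, L1 x /\ inner n x x = 1) ->
  exists x0, L1 x0 /\ inner n x0 x0 = 1 /\
    forall x, L1 x -> Dist n L2 H2 x <= Dist n L2 H2 x0 * inner n x x.
Proof.
  intros [xx [Lx Ux]]. pose proof H1 as [Hl1 _].
  destruct (attain_max n (fun x v => L1 x /\ inner n x x = 1 /\ v = vzero) (fun x _ => Dist n L2 H2 x))
    as [x0 [v0 [[L0 [U0 _]] Hmax]]].
  - exists xx, vzero. auto.
  - intros x v [Lx' [_ ->]]. split. apply (lin_vec n L1); auto. intros i _; reflexivity.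
  - exists 1. intros x v [_ [-> ->]]. split. lra. rewrite ip_zero_l. lra. intros; reflexivity.
  - exists 1. intros x v [_ [Ux' _]]. rewrite <- Ux'. rewrite (Dist_pyth n L2 H2 x).
    assert (A := ip_nonneg n (pj n L2 H2 x)). lra.
  - intros sx sv lx lv Hs Hlx Hlv Hcx Hcv. split; [split; [|split]|].
    + apply (sub_closed n L1 sx); auto. intros k; apply Hs.
    + apply (cc_ip_eq n sx); auto. intros k; apply Hs.
    + apply functional_extensionality; intros i. apply (UL_sequence (fun k => sv k i)); auto.
      eapply Un_cv_ext; [|apply cv_const]. intros k. simpl. destruct (Hs k) as [_ [_ ->]]. reflexivity.
    + unfold Dist. apply cc_ip.
      * intros i. unfold vsub. apply CV_minus; auto. apply pj_cc; auto.
      * intros i. unfold vsub. apply CV_minus; auto. apply pj_cc; auto.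
  - exists x0. split; auto. split; auto. intros x Lx'.
    assert (A := ip_nonneg n x). destruct A as [A|A].
    + set (t := / nrm n x).
      assert (np : 0 < nrm n x) by (assert (B := nrm_nonneg n x); rewrite <- nrm_sq in A; destruct B as [B|B]; auto; rewrite <- B in A; lra).
      assert (D := Hmax (vscal t x) vzero).
      rewrite Dist_scal in D. rewrite ip_scall, ip_scalr in D.
      assert (E : t * (t * inner n x x) = 1) by (unfold t; rewrite <- nrm_sq; field; lra).
      specialize (D ltac:(split; [apply (proj2 (proj2 Hl1)); auto|split; auto])).
      assert (F : t * t * inner n x x = 1) by lra.
      assert (G : Dist n L2 H2 x = Dist n L2 H2 x * (t * t * inner n x x)) by (rewrite F; ring).
      rewrite G. assert (D0 := Dist_nonneg n L2 H2 x).
      replace (Dist n L2 H2 x * (t * t * inner n x x)) with ((t * t * Dist n L2 H2 x) * inner n x x) by ring.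
      apply Rmult_le_compat_r; lra.
    + assert (Z := isvec_ip_zero n x (lin_vec n L1 x Hl1 Lx') (eq_sym A)). subst x.
      assert (E1 : Dist n L2 H2 vzero = 0).
      { unfold Dist. rewrite P_of_in. apply ip_zero_l. intros; unfold vsub, vzero; ring.
        apply (proj1 (proj2 (proj1 H2))). }
      rewrite E1, <- A. lra.
Qed.

Lemma key n L1 L2 (H1 : subsp n L1) (H2 : subsp n L2) a :
  a < 1 -> (forall x, L1 x -> Dist n L2 H2 x <= a * inner n x x) ->
  ((forall x, L1 x -> (forall z, L2 z -> inner n x z = 0) -> x = vzero) ->
     forall y, L2 y -> exists x, L1 x /\ forall z, L2 z -> inner n (vsub x y) z = 0) ->
  forall y, L2 y -> inner n y y = 1 -> Dist n L1 H1 y <= a.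
Proof.
  intros Ha Hb Honto y Ly Uy. pose proof H1 as [Hl1 _]. pose proof H2 as [Hl2 _].
  destruct (Honto) with (y := y) as [x [Lx Hx]]; auto.
  - intros x Lx Hx. apply isvec_ip_zero with n. apply (lin_vec n L1); auto.
    assert (E : pj n L2 H2 x = vzero).
    { apply P_eq. split. apply (proj1 (proj2 Hl2)).
      intros z Hz. replace (vsub x vzero) with x by (apply functional_extensionality; intros; unfold vsub, vzero; ring).
      auto. }
    specialize (Hb x Lx). unfold Dist in Hb. rewrite E in Hb.
    replace (vsub x vzero) with x in Hb by (apply functional_extensionality; intros; unfold vsub, vzero; ring).
    assert (A := ip_nonneg n x). nra.
  - assert (E : pj n L2 H2 x = y) by (apply P_eq; split; auto).
    assert (Hxy : inner n y x = 1).
    { rewrite ip_comm, (proj_ip n L2 x (pj n L2 H2 x) y (pj_spec n L2 H2 x) Ly), E. auto. }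
    assert (HX : (1 - a) * inner n x x <= 1).
    { assert (D := Dist_pyth n L2 H2 x). rewrite E, Uy in D. specialize (Hb x Lx). lra. }
    assert (Hxy' : inner n (pj n L1 H1 y) x = 1).
    { rewrite <- (proj_ip n L1 y (pj n L1 H1 y) x (pj_spec n L1 H1 y) Lx). auto. }
    assert (CS := cauchy_schwarz_sq n (pj n L1 H1 y) x). rewrite Hxy' in CS.
    assert (D := Dist_pyth n L1 H1 y). rewrite Uy in D.
    assert (X0 := ip_nonneg n x). assert (Q0 := ip_nonneg n (pj n L1 H1 y)).
    set (Q := inner n (pj n L1 H1 y) (pj n L1 H1 y)) in *. set (X := inner n x x) in *.
    assert (Xp : 0 < X) by (destruct X0 as [|X0]; auto; rewrite <- X0 in CS; nra).
    assert (Q >= 1 - a). { apply Rle_ge. apply Rmult_le_reg_r with X; auto. nra. }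
    lra.
Qed.

Lemma is_min_unique S a b : is_min S a -> is_min S b -> a = b.
Proof. intros [Ha Ha'] [Hb Hb']. apply Ha' in Hb. apply Hb' in Ha. lra. Qed.
Lemma is_inf_unique S a b : is_inf S a -> is_inf S b -> a = b.
Proof. intros [Ha Ha'] [Hb Hb']. apply Ha' in Hb. apply Hb' in Ha. lra. Qed.

Lemma sqrt_le_self y : 1 <= y -> sqrt y <= y.
Proof.
  intros H. assert (A := sqrt_sqrt y ltac:(lra)). assert (B : 1 <= sqrt y).
  { rewrite <- sqrt_1. apply sqrt_le_1_alt; auto. }
  nra.
Qed.

Lemma div_nonneg a b : 0 <= a -> 0 < b -> 0 <= a / b.
Proof. intros. unfold Rdiv. apply Rmult_le_pos; auto. left; apply Rinv_0_lt_compat; auto. Qed.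

Section Dm.
Variable n : nat.
Variable L : vec -> Prop.
Hypothesis H : subsp n L.
Notation ip := (inner n).
Notation P := (pj n L H).

Lemma dist_min x : 0 < ip x x ->
  is_min (fun s => exists v, L v /\ s = norm2 n (vsub x v) / norm2 n x)
         (norm2 n (vsub x (P x)) / norm2 n x).
Proof.
  intros Hx. assert (nx : 0 < norm2 n x) by (apply sqrt_lt_R0; auto). split.
  - exists (P x). split; auto. apply (proj1 (pj_spec n L H x)).
  - intros s [v [Lv ->]]. unfold Rdiv. apply Rmult_le_compat_r. left; apply Rinv_0_lt_compat; auto.
    unfold norm2. apply sqrt_le_1_alt. rewrite (proj_dist n L H x (P x) v (pj_spec n L H x) Lv).
    assert (A := ip_nonneg n (vsub (P x) v)). lra.
Qed.

Lemma distbar_inf x w0 : L w0 -> ip w0 w0 = 1 -> 0 < ip x x ->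
  is_inf (fun s => exists v, L v /\ Defs.nonzero n v /\ s = norm2 n (vsub x v) / norm2 n v)
         (sqrt (Dist n L H x / ip x x)).
Proof.
  intros Lw Uw Hx. pose proof H as [Hl _].
  assert (Hpy := Dist_pyth n L H x).
  set (X := ip x x) in *. set (a2 := ip (P x) (P x)) in *.
  assert (a20 : 0 <= a2) by apply ip_nonneg.
  assert (HD : Dist n L H x = X - a2) by lra. rewrite HD.
  assert (Hs : forall v, L v -> ip x v = ip (P x) v) by (intros; apply (proj_ip n L x); auto; apply pj_spec).
  split.
  - intros s [v [Lv [nzv ->]]].
    assert (Vp := nonzero_nrm n v nzv). unfold gnrm in Vp.
    assert (V0 : 0 < ip v v) by (rewrite <- nrm_sq; unfold gnrm; nra).
    unfold norm2 at 1 2. rewrite <- sqrt_div_alt by auto. apply sqrt_le_1_alt.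
    rewrite ip_expand. rewrite (Hs v Lv).
    assert (CS := cauchy_schwarz_sq n (P x) v). fold a2 in CS.
    set (s := ip (P x) v) in *. set (V := ip v v) in *.
    fold X. replace ((X - 2 * s + V) / V) with ((X - a2) / X + (X * X - 2 * s * X + a2 * V) / (X * V)) by (field; lra).
    assert (0 <= (X * X - 2 * s * X + a2 * V) / (X * V)).
    { apply div_nonneg. assert (0 <= (X - s) * (X - s)) by apply Rle_0_sqr. nra. nra. }
    lra.
  - intros b Hb. destruct a20 as [a2p|a20].
    + set (lam := X / a2). assert (lp : 0 < lam) by (apply Rdiv_lt_0_compat; auto).
      set (v := vscal lam (P x)).
      assert (Lv : L v) by (apply (proj2 (proj2 (proj2 Hl))); apply (proj1 (pj_spec n L H x))).
      assert (Ev : ip v v = X * X / a2) by (unfold v; rewrite ip_scall, ip_scalr; fold a2; unfold lam; field; lra).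
      assert (Exv : ip (vsub x v) (vsub x v) = X * (X - a2) / a2).
      { rewrite ip_expand, Ev. unfold v. rewrite ip_scalr, (Hs (P x)). fold a2 X. unfold lam. field. lra.
        apply (proj1 (pj_spec n L H x)). }
      assert (nzv : Defs.nonzero n v).
      { apply nrm_pos_nonzero. unfold gnrm, norm2. apply sqrt_lt_R0. rewrite Ev.
        apply Rdiv_lt_0_compat; nra. }
      apply Rle_trans with (norm2 n (vsub x v) / norm2 n v). apply Hb. exists v; auto.
      unfold norm2. rewrite <- sqrt_div_alt by (rewrite Ev; apply Rdiv_lt_0_compat; nra).
      rewrite Exv, Ev. right. f_equal. field. split; lra.
    + rewrite <- a20. replace ((X - 0) / X) with 1 by (field; lra). rewrite sqrt_1.
      assert (Pz : forall i, (i < n)%nat -> P x i = 0) by (apply ip_zero_coord; auto).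
      assert (Bt : forall t, 0 < t -> b <= 1 + X / (t * t)).
      { intros t Ht. set (v := vscal t w0).
        assert (Lv : L v) by (apply (proj2 (proj2 (proj2 Hl))); auto).
        assert (Ev : ip v v = t * t) by (unfold v; rewrite ip_scall, ip_scalr, Uw; ring).
        assert (Exv : ip (vsub x v) (vsub x v) = X + t * t).
        { rewrite ip_expand, Ev. unfold v. rewrite ip_scalr, (Hs w0 Lw), (ip_zero_l n (P x) w0 Pz). fold X. ring. }
        assert (nzv : Defs.nonzero n v).
        { apply nrm_pos_nonzero. unfold gnrm, norm2. apply sqrt_lt_R0. rewrite Ev. nra. }
        apply Rle_trans with (norm2 n (vsub x v) / norm2 n v). apply Hb. exists v; auto.
        unfold norm2. rewrite <- sqrt_div_alt by (rewrite Ev; nra).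
        rewrite Exv, Ev. replace ((X + t * t) / (t * t)) with (1 + X / (t * t)) by (field; lra).
        apply sqrt_le_self. assert (0 <= X / (t * t)) by (apply div_nonneg; nra). lra. }
      apply Rnot_lt_le. intros C.
      set (t := sqrt (2 * X / (b - 1))).
      assert (tt : t * t = 2 * X / (b - 1)) by (apply sqrt_sqrt; apply div_nonneg; lra).
      assert (tp : 0 < t) by (apply sqrt_lt_R0; apply Rdiv_lt_0_compat; lra).
      specialize (Bt t tp). rewrite tt in Bt.
      replace (X / (2 * X / (b - 1))) with ((b - 1) / 2) in Bt by (field; lra). lra.
Qed.
End Dm.

Lemma part_a n m L1 L2 : (1 <= m)%nat -> (m < n)%nat -> Gr n m L1 -> Gr n m L2 ->
  exists d, is_max (proj_diff_set n L1 L2) d /\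
            is_max (dist_set n L1 L2) d /\
            is_max (distbar_set n L1 L2) d.
Proof.
  intros Hm Hmn G1 G2. assert (Hn : (1 <= n)%nat) by lia.
  assert (H1 := Gr_subsp n m L1 G1). assert (H2 := Gr_subsp n m L2 G2).
  pose proof H1 as [Hl1 _]. pose proof H2 as [Hl2 _].
  assert (U1 := Gr_unit n Hn m L1 G1 Hm). assert (U2 := Gr_unit n Hn m L2 G2 Hm).
  destruct (Dist_max n L1 L2 H1 H2 U1) as [x1 [Lx1 [Ux1 B1]]].
  destruct (Dist_max n L2 L1 H2 H1 U2) as [x2 [Lx2 [Ux2 B2]]].
  set (a := Dist n L2 H2 x1) in *. set (b := Dist n L1 H1 x2) in *.
  assert (a1 : 0 <= a <= 1).
  { assert (D := Dist_pyth n L2 H2 x1). assert (E := ip_nonneg n (pj n L2 H2 x1)).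
    split. apply Dist_nonneg. fold a in D. lra. }
  assert (b1 : 0 <= b <= 1).
  { assert (D := Dist_pyth n L1 H1 x2). assert (E := ip_nonneg n (pj n L1 H1 x2)).
    split. apply Dist_nonneg. fold b in D. lra. }
  assert (K12 : a < 1 -> b <= a).
  { intros Ha. apply (key n L1 L2 H1 H2 a Ha B1); auto. apply (Gr_onto n m); auto. }
  assert (K21 : b < 1 -> a <= b).
  { intros Hb. apply (key n L2 L1 H2 H1 b Hb B2); auto. apply (Gr_onto n m); auto. }
  assert (Eab : a = b).
  { destruct (Rlt_le_dec a 1). specialize (K12 r). assert (b < 1) by lra. specialize (K21 H). lra.
    destruct (Rlt_le_dec b 1). specialize (K21 r0). lra. lra. }
  assert (Hvec1 := lin_vec n L1). assert (Hvec2 := lin_vec n L2).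
  assert (Hval : forall x, L1 x -> 0 < inner n x x ->
     norm2 n (vsub x (pj n L2 H2 x)) / norm2 n x <= sqrt a /\
     sqrt (Dist n L2 H2 x / inner n x x) <= sqrt a).
  { intros x Lx Xp. specialize (B1 x Lx).
    assert (R : Dist n L2 H2 x / inner n x x <= a).
    { apply (Rmult_le_reg_r (inner n x x)); auto. unfold Rdiv. rewrite Rmult_assoc, Rinv_l by lra. lra. }
    split; [|apply sqrt_le_1_alt; auto].
    unfold norm2. rewrite <- sqrt_div_alt by auto. apply sqrt_le_1_alt; auto. }
  assert (Nx1 : norm2 n x1 = 1) by (apply nrm_unit; auto).
  assert (nzx1 : Defs.nonzero n x1) by (apply nrm_pos_nonzero; unfold gnrm; lra).
  exists (sqrt a). split; [|split].
  - split.
    + exists x1, x1, (pj n L2 H2 x1). split; [eauto|]. split; auto. split. apply proj_of_in; auto.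
      split. apply pj_spec. reflexivity.
    + intros r [z [p1 [p2 [zv [Nz [Hp1 [Hp2 ->]]]]]]].
      unfold norm2 at 1. apply sqrt_le_1_alt.
      assert (Uz : inner n z z = 1) by (apply nrm_unit; auto).
      set (q := pj n L2 H2 p1). set (w := vsub z p1). set (rr := pj n L2 H2 w).
      assert (Lp1 : L1 p1) by (apply (proj1 Hp1)).
      assert (Lq : L2 q) by (apply (proj1 (pj_spec n L2 H2 p1))).
      assert (Lrr : L2 rr) by (apply (proj1 (pj_spec n L2 H2 w))).
      assert (Ep2 : p2 = vadd q rr).
      { eapply proj_unique; eauto. split. apply (proj1 (proj2 (proj2 Hl2))); auto.
        intros y Ly. replace (vsub z (vadd q rr)) with (vadd (vsub p1 q) (vsub w rr))
          by (apply functional_extensionality; intros; unfold w, vadd, vsub; ring).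
        rewrite ip_addl, (proj_orth n L2 p1 q y (pj_spec n L2 H2 p1) Ly),
          (proj_orth n L2 w rr y (pj_spec n L2 H2 w) Ly). ring. }
      rewrite Ep2.
      replace (vsub p1 (vadd q rr)) with (vsub (vsub p1 q) rr)
        by (apply functional_extensionality; intros; unfold vadd, vsub; ring).
      rewrite ip_expand. rewrite (proj_orth n L2 p1 q rr (pj_spec n L2 H2 p1) Lrr).
      fold (Dist n L2 H2 p1). assert (Da := B1 p1 Lp1).
      assert (Rb : inner n rr rr <= b * inner n w w).
      { assert (E1 : inner n rr rr = inner n w rr)
          by (symmetry; apply (proj_ip n L2 w rr rr (pj_spec n L2 H2 w) Lrr)).
        set (s := pj n L1 H1 rr).
        assert (Ls : L1 s) by (apply (proj1 (pj_spec n L1 H1 rr))).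
        assert (E2 : inner n w s = 0) by (apply (proj_orth n L1 z p1 s Hp1 Ls)).
        assert (E3 : inner n rr rr = inner n w (vsub rr s)) by (rewrite ip_subr; lra).
        assert (CS := cauchy_schwarz_sq n w (vsub rr s)). rewrite <- E3 in CS.
        assert (Ed : inner n (vsub rr s) (vsub rr s) = Dist n L1 H1 rr) by reflexivity. rewrite Ed in CS. assert (Db := B2 rr Lrr).
        assert (W0 := ip_nonneg n w). assert (R0 := ip_nonneg n rr).
        destruct R0 as [R0|R0]; [|rewrite <- R0; nra].
        assert (0 <= inner n w w * (b * inner n rr rr - Dist n L1 H1 rr)) by (apply Rmult_le_pos; lra).
        assert (inner n rr rr * inner n rr rr <= (b * inner n w w) * inner n rr rr) by nra.
        apply Rmult_le_reg_r with (inner n rr rr); auto. }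
      assert (Pz := proj_pyth n L1 z p1 Hp1). fold w in Pz.
      assert (Ed2 : inner n (vsub p1 q) (vsub p1 q) = Dist n L2 H2 p1) by reflexivity. rewrite Ed2.
      assert (Sum : a * inner n p1 p1 + b * inner n w w = a).
      { rewrite <- Eab. rewrite <- Rmult_plus_distr_l, <- Pz, Uz. ring. }
      lra.
  - split.
    + exists x1. split; auto. split; auto.
      replace (sqrt a) with (norm2 n (vsub x1 (pj n L2 H2 x1)) / norm2 n x1).
      apply dist_min; auto. lra. rewrite Nx1. unfold norm2, Dist in *. fold a. field.
    + intros r [x [Lx [nzx Hmin]]].
      assert (Xp : 0 < inner n x x) by (rewrite <- nrm_sq; assert (D := nonzero_nrm n x nzx); nra).
      rewrite (is_min_unique _ _ _ Hmin (dist_min n L2 H2 x Xp)). apply Hval; auto.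
  - destruct U2 as [w0 [Lw0 Uw0]]. split.
    + exists x1. split; auto. split; auto.
      replace (sqrt a) with (sqrt (Dist n L2 H2 x1 / inner n x1 x1)).
      apply distbar_inf with w0; auto. lra. rewrite Ux1. f_equal. fold a. field.
    + intros r [x [Lx [nzx Hinf]]].
      assert (Xp : 0 < inner n x x) by (rewrite <- nrm_sq; assert (D := nonzero_nrm n x nzx); nra).
      rewrite (is_inf_unique _ _ _ Hinf (distbar_inf n L2 H2 x w0 Lw0 Uw0 Xp)). apply Hval; auto.
Qed.


Theorem mainTheorem6 (n m : nat) (K : vec -> Prop)
  (Hm1 : (1 <= m)%nat) (Hmn : (m < n)%nat) (HK : regular_cone n K) :
  (* (a) *)
  (forall L1 L2, Gr n m L1 -> Gr n m L2 ->
     exists d, is_max (proj_diff_set n L1 L2) d /\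
               is_max (dist_set n L1 L2) d /\
               is_max (distbar_set n L1 L2) d) /\
  (* (b) *)
  (forall L, Gr n m L -> (exists x, L x /\ vinterior n K x) ->
     exists a, is_min (angle_set n (perp n L) (dual_cone n K)) a /\
               is_min (nu_set n K L) (sin a)) /\
  (* (c) *)
  (forall L, Gr n m L -> (exists u, perp n L u /\ vinterior n (dual_cone n K) u) ->
     exists a, is_min (angle_set n L K) a /\
               is_min (nubar_set n K L) (sin a)).
Proof.
  split; [|split].
  - intros L1 L2 G1 G2. apply (part_a n m); auto.
  - intros L G _. apply (part_b n m K); auto.
  - intros L G _. apply (part_c n m K); auto.
Qed.
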